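(* Let $\alpha>0$, $\beta,\eta,\kappa\in\mathbb{R}$, $\rho>0$, $p\geq 1$, and $0\le a<x$. Let $f,g$ be two positive functions on $[0,\infty)$ with $f,g\in X^{p}_{c}(a,x)$ (for some $c\in\mathbb{R}$), such that ${}^{\rho}\mathcal{I}^{\alpha,\beta}_{a+,\eta,\kappa}f^{p}(x)<\infty$ and ${}^{\rho}\mathcal{I}^{\alpha,\beta}_{a+,\eta,\kappa}g^{p}(x)<\infty$. If there are real numbers $m,M>0$ with $0<m\leq \frac{f(t)}{g(t)}\leq M$ for all $t\in[a,x]$, then $$\left({}^{\rho}\mathcal{I}^{\alpha,\beta}_{a+,\eta,\kappa}f^{p}(x)\right)^{1/p}+\left({}^{\rho}\mathcal{I}^{\alpha,\beta}_{a+,\eta,\kappa}g^{p}(x)\right)^{1/p}\leq c_{1}\left({}^{\rho}\mathcal{I}^{\alpha,\beta}_{a+,\eta,\kappa}(f+g)^{p}(x)\right)^{1/p},$$ where $c_{1}=\frac{M(m+1)+(M+1)}{(m+1)(M+1)}$.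
   Context: For $c\in\mathbb{R}$ and $1\le p<\infty$, $X^{p}_{c}(a,b)$ denotes the space of Lebesgue measurable functions $f$ on $(a,b)$ with $\left(\int_a^b |t^{c}f(t)|^{p}\,\frac{dt}{t}\right)^{1/p}<\infty$. For $\alpha>0$, $\beta,\eta,\kappa\in\mathbb{R}$, $\rho>0$, $0\le a<x$, and a function $\varphi$, the generalized (Katugampola) fractional integral is $${}^{\rho}\mathcal{I}^{\alpha,\beta}_{a+,\eta,\kappa}\varphi(x)=\frac{\rho^{1-\beta}x^{\kappa}}{\Gamma(\alpha)}\int_{a}^{x}\frac{\tau^{\rho(\eta+1)-1}}{(x^{\rho}-\tau^{\rho})^{1-\alpha}}\varphi(\tau)\,d\tau,$$ whenever the integral exists. Notation such as ${}^{\rho}\mathcal{I}^{\alpha,\beta}_{a+,\eta,\kappa}f^{p}(x)$ or ${}^{\rho}\mathcal{I}^{\alpha,\beta}_{a+,\eta,\kappa}(f+g)^{p}(x)$ means the operator applied to the function $\tau\mapsto f(\tau)^p$, resp. $\tau\mapsto (f(\tau)+g(\tau))^p$, evaluated at $x$. *)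

(* Defs.v *)
From mathcomp Require Import all_boot all_order all_algebra.
From mathcomp Require Import all_classical all_reals all_analysis.
Set Implicit Arguments. Unset Strict Implicit. Unset Printing Implicit Defensive.
Import Order.TTheory GRing.Theory Num.Theory.
Local Open Scope classical_set_scope.
Local Open Scope ring_scope.

Definition Gamma {R : realType} (alpha : R) : R :=
  Rintegral (@lebesgue_measure R) `]0%R, +oo[
    (fun t => t `^ (alpha - 1) * expR (- t)).

Definition in_Xpc {R : realType} (c p a b : R) (f : R -> R) : Prop :=
  measurable_fun `]a, b[ f /\
  (\int[@lebesgue_measure R]_(t in `]a, b[)
      ((`| t `^ c * f t |) `^ p / t)%:E < +oo)%E.

Definition katI {R : realType} (alpha beta eta kappa rho a : R)
    (phi : R -> R) (x : R) : \bar R :=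
  ((rho `^ (1 - beta) * x `^ kappa / Gamma alpha)%:E *
   \int[@lebesgue_measure R]_(tau in `]a, x[)
      (tau `^ (rho * (eta + 1) - 1) / (x `^ rho - tau `^ rho) `^ (1 - alpha)
        * phi tau)%:E)%E.

(* Main.v *)
Require Import Defs.
From mathcomp Require Import all_boot all_order all_algebra.
From mathcomp Require Import all_classical all_reals all_analysis.
From mathcomp Require Import measurable_realfun.
From mathcomp Require Import ring lra.
Import Order.TTheory GRing.Theory Num.Theory.
Local Open Scope classical_set_scope.
Local Open Scope ring_scope.

Lemma key_int (R : realType) (D : set R) (mD : measurable D) (w h1 h2 : R -> R) (k : R) :
  measurable_fun D w -> measurable_fun D h1 -> measurable_fun D h2 -> 0 <= k ->
  (forall t, D t -> 0 <= w t) -> (forall t, D t -> 0 <= h1 t) ->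
  (forall t, D t -> 0 <= h2 t) -> (forall t, D t -> h1 t <= k * h2 t) ->
  (\int[@lebesgue_measure R]_(t in D) (w t * h1 t)%:E <=
    k%:E * \int[@lebesgue_measure R]_(t in D) (w t * h2 t)%:E)%E.
Proof.
move=> mw mh1 mh2 k0 w0 h10 h20 hk.
rewrite -ge0_integralZl_EFin //; last 2 first.
- by move=> t Dt; rewrite lee_fin mulr_ge0 ?w0 ?h20.
- by apply/measurable_EFinP; exact: measurable_funM.
apply: ge0_le_integral => //.
- by move=> t Dt; rewrite lee_fin mulr_ge0 ?w0 ?h10.
- by apply/measurable_EFinP; exact: measurable_funM.
- apply/measurable_EFinP => /=.
  have -> : (fun t => fine (k%:E * (w t * h2 t)%:E)) = (fun t => k * (w t * h2 t)) by [].
  apply: measurable_funM; first exact: measurable_cst.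
  exact: measurable_funM.
- move=> t Dt; rewrite -EFinM lee_fin mulrCA; apply: ler_wpM2l; first exact: w0.
  exact: hk.
Qed.

Lemma root_le (R : realType) (u s k p : R) : 0 < p -> 0 <= u -> 0 <= s -> 0 <= k ->
  u <= k `^ p * s -> u `^ p^-1 <= k * s `^ p^-1.
Proof.
move=> p0 u0 s0 k0 h.
rewrite -[k in k * _](powRr1 k0) -(divff (lt0r_neq0 p0)) powRrM -powRM ?powR_ge0 //.
apply: ge0_ler_powR => //; rewrite ?invr_ge0 ?ltW // nnegrE //.
by rewrite mulr_ge0 ?powR_ge0.
Qed.

Theorem theorem8 (R : realType) (alpha beta eta kappa rho p a x c m M : R)
  (f g : R -> R) :
  (0 < alpha)%R -> (0 < rho)%R -> (1 <= p)%R -> (0 <= a)%R -> (a < x)%R ->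
  (forall t, (0 <= t)%R -> (0 < f t)%R) -> (forall t, (0 <= t)%R -> (0 < g t)%R) ->
  in_Xpc c p a x f -> in_Xpc c p a x g ->
  (katI alpha beta eta kappa rho a (fun t => (f t `^ p)%R) x < +oo)%E ->
  (katI alpha beta eta kappa rho a (fun t => (g t `^ p)%R) x < +oo)%E ->
  (0 < m)%R -> (0 < M)%R ->
  (forall t, (a <= t <= x)%R -> (m <= f t / g t <= M)%R) ->
  ((fine (katI alpha beta eta kappa rho a (fun t => (f t `^ p)%R) x)) `^ p^-1
  + (fine (katI alpha beta eta kappa rho a (fun t => (g t `^ p)%R) x)) `^ p^-1
  <= (M * (m + 1) + (M + 1)) / ((m + 1) * (M + 1))
     * (fine (katI alpha beta eta kappa rho a (fun t => ((f t + g t) `^ p)%R) x))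
         `^ p^-1)%R.
Proof.
move=> alpha0 rho0 p1 a0 ax f0 g0 [mf _] [mg _] kFoo kGoo m0 M0 ratio.
have p0 : 0 < p by lra.
set D := `]a, x[%classic.
have mD : measurable D by exact: measurable_itv.
have Dp : forall t, D t -> a < t < x by move=> t; rewrite /D /= in_itv.
set W := fun tau : R => tau `^ (rho * (eta + 1) - 1) / (x `^ rho - tau `^ rho) `^ (1 - alpha).
set C := rho `^ (1 - beta) * x `^ kappa / Gamma alpha.
have kE : forall phi, katI alpha beta eta kappa rho a phi x =
   (C%:E * \int[@lebesgue_measure R]_(t in D) (W t * phi t)%:E)%E by [].
have W0 : forall t, 0 <= W t by move=> t; rewrite mulr_ge0 ?invr_ge0 ?powR_ge0.
have mW : measurable_fun D W.
  have -> : W = fun tau => tau `^ (rho * (eta + 1) - 1) * (x `^ rho - tau `^ rho) `^ (- (1 - alpha)).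
    by apply/funext => t; rewrite /W powRN.
  apply: (measurable_funS measurableT (@subsetT _ D)).
  apply: measurable_funM; first exact: measurable_powR.
  apply: (measurableT_comp (measurable_powR _)) => /=.
  apply: measurable_funB; first exact: measurable_cst.
  exact: measurable_powR.
have C0 : 0 <= C.
  rewrite divr_ge0 ?mulr_ge0 ?powR_ge0 //.
  by apply: Rintegral_ge0 => t _; rewrite mulr_ge0 ?powR_ge0 ?expR_ge0.
have mfp : measurable_fun D (fun t => f t `^ p) by exact: measurableT_comp (measurable_powR _) mf.
have mgp : measurable_fun D (fun t => g t `^ p) by exact: measurableT_comp (measurable_powR _) mg.
have mSp : measurable_fun D (fun t => (f t + g t) `^ p).
  by apply: measurableT_comp (measurable_powR _) _; exact: measurable_funD.
have fgD : forall t, D t -> [/\ 0 < f t, 0 < g t, m * g t <= f t & f t <= M * g t].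
  move=> t /Dp /andP[ta tx].
  have t0 : 0 <= t by lra.
  have ft := f0 t t0; have gt := g0 t t0.
  have /andP[h1 h2] : m <= f t / g t <= M by apply: ratio; rewrite !ltW.
  by split => //; [rewrite -ler_pdivlMr | rewrite -ler_pdivrMr].
set cM := M / (M + 1).
set cm := 1 / (m + 1).
set q := 1 + 1 / m.
have powle : forall u v k, 0 <= u -> 0 <= v -> 0 <= k -> u <= k * v -> u `^ p <= k `^ p * v `^ p.
  move=> u v k u0 v0 k0 h; rewrite -powRM //; apply: ge0_ler_powR; [lra| | |]; rewrite ?nnegrE ?mulr_ge0 //.
have IF : (\int[@lebesgue_measure R]_(t in D) (W t * f t `^ p)%:E <=
    (cM `^ p)%:E * \int[@lebesgue_measure R]_(t in D) (W t * (f t + g t) `^ p)%:E)%E.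
  apply: key_int => //; try by move=> *; exact: powR_ge0.
  move=> t Dt.
  have [fp gp h1 h2] := fgD t Dt.
  apply: powle; [lra|lra|apply: divr_ge0; lra|].
  have -> : cM * (f t + g t) = (M * (f t + g t)) / (M + 1).
    by rewrite /cM; field; lra.
  rewrite ler_pdivlMr; lra.
have IG : (\int[@lebesgue_measure R]_(t in D) (W t * g t `^ p)%:E <=
    (cm `^ p)%:E * \int[@lebesgue_measure R]_(t in D) (W t * (f t + g t) `^ p)%:E)%E.
  apply: key_int => //; try by move=> *; exact: powR_ge0.
  move=> t Dt.
  have [fp gp h1 h2] := fgD t Dt.
  apply: powle; [lra|lra|apply: divr_ge0; lra|].
  have -> : cm * (f t + g t) = (f t + g t) / (m + 1).
    by rewrite /cm; field; lra.
  rewrite ler_pdivlMr; lra.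
have IS : (\int[@lebesgue_measure R]_(t in D) (W t * (f t + g t) `^ p)%:E <=
    (q `^ p)%:E * \int[@lebesgue_measure R]_(t in D) (W t * f t `^ p)%:E)%E.
  apply: key_int => //; try by move=> *; exact: powR_ge0.
  move=> t Dt.
  have [fp gp h1 h2] := fgD t Dt.
  have q0 : 0 <= q by rewrite /q addr_ge0 ?divr_ge0; lra.
  apply: powle; [lra|lra|exact: q0|].
  have -> : q * f t = f t + f t / m.
    by rewrite /q; field; lra.
  rewrite lerD2l ler_pdivlMr; lra.
set kF := katI alpha beta eta kappa rho a (fun t => (f t `^ p)%R) x.
set kG := katI alpha beta eta kappa rho a (fun t => (g t `^ p)%R) x.
set kS := katI alpha beta eta kappa rho a (fun t => ((f t + g t) `^ p)%R) x.
have ge0k : forall h : R -> R, (forall t, D t -> 0 <= h t) ->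
    (0 <= katI alpha beta eta kappa rho a h x)%E.
  move=> h h0; rewrite kE mule_ge0 // ?lee_fin //.
  by apply: integral_ge0 => t Dt; rewrite lee_fin mulr_ge0 ?h0.
have kF0 : (0 <= kF)%E by apply: ge0k => t _; exact: powR_ge0.
have kG0 : (0 <= kG)%E by apply: ge0k => t _; exact: powR_ge0.
have kS0 : (0 <= kS)%E by apply: ge0k => t _; exact: powR_ge0.
have kFS : (kF <= (cM `^ p)%:E * kS)%E.
  by rewrite /kF /kS !kE muleCA; apply: lee_wpmul2l; rewrite ?lee_fin.
have kGS : (kG <= (cm `^ p)%:E * kS)%E.
  by rewrite /kG /kS !kE muleCA; apply: lee_wpmul2l; rewrite ?lee_fin.
have kSF : (kS <= (q `^ p)%:E * kF)%E.
  by rewrite /kS /kF !kE muleCA; apply: lee_wpmul2l; rewrite ?lee_fin.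
have kFlt : (kF < +oo)%E := kFoo.
have kGlt : (kG < +oo)%E := kGoo.
clearbody kF kG kS.
have kSoo : (kS < +oo)%E.
  apply: (le_lt_trans kSF); apply: lte_mul_pinfty; [by rewrite lee_fin powR_ge0 | by [] | exact: kFlt].
have finS : kS \is a fin_num.
  rewrite (ge0_fin_numE kS0).
  exact: kSoo.
have finF : kF \is a fin_num.
  rewrite (ge0_fin_numE kF0).
  exact: kFlt.
have finG : kG \is a fin_num.
  rewrite (ge0_fin_numE kG0).
  exact: kGlt.
have uF : fine kF <= cM `^ p * fine kS.
  have h : ((cM `^ p)%:E * kS)%E \is a fin_num by rewrite fin_numM.
  by move: (fine_le finF h kFS); rewrite fineM.
have uG : fine kG <= cm `^ p * fine kS.
  have h : ((cm `^ p)%:E * kS)%E \is a fin_num by rewrite fin_numM.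
  by move: (fine_le finG h kGS); rewrite fineM.
have s0 := fine_ge0 kS0.
have cM0 : 0 <= cM by apply: divr_ge0; lra.
have cm0 : 0 <= cm by apply: divr_ge0; lra.
have e1 := @root_le R _ _ _ _ p0 (fine_ge0 kF0) s0 cM0 uF.
have e2 := @root_le R _ _ _ _ p0 (fine_ge0 kG0) s0 cm0 uG.
have -> : (M * (m + 1) + (M + 1)) / ((m + 1) * (M + 1)) = cM + cm.
  by rewrite /cM /cm; field; apply/andP; split; lra.
rewrite mulrDl; exact: lerD.
Qed.
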